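(* Let $A\in\mathbb{R}^{m\times n}$ be semi-monotone, and let $A=P_1-R_1+S_1=P_2-R_2+S_2$ be two double proper regular (respectively, two double proper weak regular) splittings of $A$. Suppose $N(S_2)\supseteq N(P_2)$, $R(S_2)\subseteq R(P_2)$, $1\notin\sigma(S_2P_1^{\dagger})$, and $\widehat{A}^{\dagger}\geq 0$, where $\widehat{A}=(I-S_2P_1^{\dagger})A$. Then $\rho(W_{12})<1$, where $$W_{12}=\begin{pmatrix} P_2^{\dagger}R_2-P_2^{\dagger}S_2P_1^{\dagger}R_1 & P_2^{\dagger}S_2P_1^{\dagger}S_1\\ I & 0\end{pmatrix}\in\mathbb{R}^{2n\times 2n}.$$
   Context: For $M\in\mathbb{R}^{m\times n}$, $M^{\dagger}$ is its Moore–Penrose inverse, $R(M)$ and $N(M)$ its range and null space; inequalities between matrices are entrywise; $\rho$ is the spectral radius and $\sigma$ the set of eigenvalues; $I$ is the $n\times n$ (or $m\times m$, as appropriate) identity. $A$ is semi-monotone if $A^{\dagger}\geq 0$. A double splitting $A=P-R+S$ (with $P,R,S\in\mathbb{R}^{m\times n}$) is a double proper splitting if $R(P)=R(A)$ and $N(P)=N(A)$; it is a double proper regular splitting if moreover $P^{\dagger}\geq 0$, $R\geq 0$, $S\leq 0$; a double proper weak regular splitting if moreover $P^{\dagger}\geq 0$, $P^{\dagger}R\geq 0$, $P^{\dagger}S\leq 0$. *)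

(* Defs.v *)
(* Real matrices over an abstract real closed field R;
   eigenvalues are taken in the algebraic closure R[i] = complex R. *)
From HB Require Import structures.
From mathcomp Require Import all_boot all_order all_algebra.
From mathcomp Require Import complex.
Set Implicit Arguments. Unset Strict Implicit. Unset Printing Implicit Defensive.
Import Order.TTheory GRing.Theory Num.Theory.
Local Open Scope ring_scope.

Section Defs.
Variable R : rcfType.

Definition is_MP_inverse (m n : nat) (A : 'M[R]_(m, n)) (X : 'M[R]_(n, m)) : Prop :=
  [/\ A *m X *m A = A, X *m A *m X = X,
      (A *m X)^T = A *m X & (X *m A)^T = X *m A].

Definition mx_nonneg (m n : nat) (M : 'M[R]_(m, n)) : Prop := forall i j, 0 <= M i j.
Definition mx_nonpos (m n : nat) (M : 'M[R]_(m, n)) : Prop := forall i j, M i j <= 0.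

Definition in_range (m n : nat) (M : 'M[R]_(m, n)) (y : 'cV[R]_m) : Prop :=
  exists x : 'cV[R]_n, y = M *m x.
Definition in_null (m n : nat) (M : 'M[R]_(m, n)) (x : 'cV[R]_n) : Prop :=
  M *m x = 0.

Definition cmx (n : nat) (M : 'M[R]_n) : 'M[R[i]]_n := map_mx (real_complex R) M.

Definition spectrum (n : nat) (M : 'M[R]_n) : pred R[i] :=
  fun z => eigenvalue (cmx M) z.

Definition eigen_seq (n : nat) (M : 'M[R]_n) : seq R[i] :=
  sval (closed_field_poly_normal (char_poly (cmx M))).

(* spectral radius: max of |lambda| over the eigenvalues (a real number,
   living in R[i] as the norm of a complex number) *)
Definition spectral_radius (n : nat) (M : 'M[R]_n) : R[i] :=
  \big[Num.max/0]_(z <- eigen_seq M) `|z|.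

End Defs.

Definition double_proper_splitting (R : rcfType) (m n : nat)
  (A P Rm S : 'M[R]_(m, n)) : Prop :=
  [/\ A = P - Rm + S,
      (forall y, in_range P y <-> in_range A y) &
      (forall x, in_null P x <-> in_null A x)].

Definition dp_regular (R : rcfType) (m n : nat)
  (A P Rm S : 'M[R]_(m, n)) (Pd : 'M[R]_(n, m)) : Prop :=
  [/\ double_proper_splitting A P Rm S, is_MP_inverse P Pd,
      mx_nonneg Pd, mx_nonneg Rm & mx_nonpos S].

Definition dp_weak_regular (R : rcfType) (m n : nat)
  (A P Rm S : 'M[R]_(m, n)) (Pd : 'M[R]_(n, m)) : Prop :=
  [/\ double_proper_splitting A P Rm S, is_MP_inverse P Pd,
      mx_nonneg Pd, mx_nonneg (Pd *m Rm) & mx_nonpos (Pd *m S)].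

(* Main.v *)
Require Import Defs.
From HB Require Import structures.
From mathcomp Require Import all_boot all_order all_algebra.
From mathcomp Require Import complex lra.
Import Order.TTheory GRing.Theory Num.Theory.
Local Open Scope ring_scope.
Local Open Scope complex_scope.
Set Implicit Arguments. Unset Strict Implicit.

Lemma char_poly_tr (F : comNzRingType) N (M : 'M[F]_N) : char_poly M^T = char_poly M.
Proof.
rewrite /char_poly /char_poly_mx -det_tr; congr (\det _).
by rewrite raddfB /= tr_scalar_mx map_trmx trmxK.
Qed.

Definition nc {R : rcfType} (z : R[i]) : R := Num.sqrt (@complex.Re _ z ^+ 2 + @complex.Im _ z ^+ 2).

Lemma normcC (R : rcfType) (z : R[i]) : `|z| = (nc z)%:C.
Proof. by rewrite normc_def. Qed.

Lemma normc_ge0 (R : rcfType) (z : R[i]) : 0 <= nc z.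
Proof. by rewrite sqrtr_ge0. Qed.

Lemma eq0_nc (R : rcfType) (z : R[i]) : nc z = 0 -> z = 0.
Proof. by move=> h; apply/normr0_eq0; rewrite normcC h. Qed.

Lemma mono_mul (R : rcfType) k n (M : 'M[R]_(k, n)) (x y : 'cV[R]_n) i :
  mx_nonneg M -> (forall j, x j 0 <= y j 0) -> (M *m x) i 0 <= (M *m y) i 0.
Proof.
move=> HM Hxy; rewrite !mxE; apply: ler_sum => j _.
by apply: ler_wpM2l.
Qed.

Lemma nonneg_mul (R : rcfType) k n (M : 'M[R]_(k, n)) (x : 'cV[R]_n) i :
  mx_nonneg M -> (forall j, 0 <= x j 0) -> 0 <= (M *m x) i 0.
Proof.
move=> HM Hx; rewrite !mxE; apply: sumr_ge0 => j _.
by apply: mulr_ge0.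
Qed.

Lemma core (R : rcfType) m n (T : 'M[R]_n) (Pd : 'M[R]_(n, m)) (V : 'M[R]_(m, n))
  (Ah : 'M[R]_(n, m)) (u : 'cV[R]_n) :
  mx_nonneg T -> mx_nonneg Pd -> mx_nonneg Ah -> T = Pd *m V ->
  Ah = Pd + T *m Ah ->
  (forall i, 0 <= u i 0) -> (forall i, u i 0 <= (T *m u) i 0) -> u = 0.
Proof.
move=> HT HPd HAh HTV HAhe Hu0 HTu.
pose c : 'cV[R]_m := \col_i `|(V *m u) i 0|.
have Hc0 : forall j, 0 <= c j 0 by move=> j; rewrite /c mxE normr_ge0.
have HcV : forall j, (V *m u) j 0 <= c j 0.
  by move=> j; rewrite /c [X in _ <= X]mxE; apply: ler_norm.
pose a := Ah *m c.
have Ha0 : forall j, 0 <= a j 0 by move=> j; apply: nonneg_mul.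
have Hae : a = Pd *m c + T *m a by rewrite /a {1}HAhe mulmxDl mulmxA.
have HPc : forall j, u j 0 <= (Pd *m c) j 0.
  move=> j; apply: le_trans (HTu j) _; rewrite HTV -mulmxA.
  exact: mono_mul.
apply/matrixP => i j0; rewrite ord1 mxE.
apply/eqP; apply/negPn/negP => Hne.
have Hpos : 0 < u i 0 by rewrite lt_def Hne Hu0.
pose F := fun j => a j 0 / u j 0.
case: (@arg_minP _ _ _ i (fun j => 0 < u j 0) F Hpos) => i0 Hi0 Hmin.
pose t := F i0.
have Ht0 : 0 <= t by rewrite /t /F divr_ge0 // ltW.
have Hat : forall j, t * u j 0 <= a j 0.
  move=> j; have [Hj|Hj] := boolP (0 < u j 0).
    by rewrite -ler_pdivlMr //; exact: Hmin.
  have -> : u j 0 = 0 by apply/eqP; rewrite eq_le Hu0 andbT leNgt.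
  by rewrite mulr0.
have HTa : t * u i0 0 <= (T *m a) i0 0.
  apply: le_trans (_ : t * (T *m u) i0 0 <= _).
    by apply: ler_wpM2l.
  have -> : t * (T *m u) i0 0 = (T *m (t *: u)) i0 0.
    by rewrite -scalemxAr [in RHS]mxE.
  apply: mono_mul => // j; by rewrite mxE.
have : a i0 0 = t * u i0 0 by rewrite /t /F divfK // gt_eqF.
rewrite Hae mxE => Heq.
have := HPc i0; have := HTa; rewrite -Heq (mxE) => h1 h2.
have : u i0 0 <= 0 by move: h1 h2; rewrite !mxE; lra.
by rewrite leNgt Hi0.
Qed.
Lemma spec_lt1 (R : rcfType) N (W : 'M[R]_N) : mx_nonneg W ->
  (forall u : 'cV[R]_N, (forall i, 0 <= u i 0) ->
     (forall i, u i 0 <= (W *m u) i 0) -> u = 0) ->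
  spectral_radius W < 1.
Proof.
move=> HW Hcore; rewrite /spectral_radius big_seq.
apply: (big_ind (fun x : R[i] => x < 1)).
- exact: ltr01.
- move=> x y Hx Hy; rewrite /Num.max /Order.max; by case: ifP.
move=> z Hz.
have Hroot : root (char_poly (cmx W)) z.
  move: Hz; rewrite /eigen_seq; case: closed_field_poly_normal => r Dr /=.
  rewrite (monicP (char_poly_monic _)) scale1r in Dr.
  by rewrite Dr root_prod_XsubC.
move: Hroot; rewrite -char_poly_tr -eigenvalue_root_char => /eigenvalueP [v Hv Hnz].
pose x := v^T.
have Hx : cmx W *m x = z *: x.
  by rewrite /x -(trmxK (cmx W)) -trmx_mul Hv linearZ.
have Hxnz : x != 0 by rewrite /x trmx_eq0.
clearbody x.
have Hreal : `|z| \is Num.real by apply: normr_real.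
rewrite real_ltNge ?real1 //; apply/negP => Hz1.
pose u : 'cV[R]_N := \col_i nc (x i 0).
have Hu0 : forall i, 0 <= u i 0 by move=> i; rewrite mxE normc_ge0.
have Hu : forall i, u i 0 <= (W *m u) i 0.
  move=> i; rewrite -lecR.
  have -> : ((W *m u) i 0)%:C = \sum_j (W i j)%:C * `|x j 0|.
    rewrite mxE rmorph_sum; apply: eq_bigr => j _.
    by rewrite rmorphM /= mxE normcC.
  rewrite mxE -normcC.
  apply: le_trans (ler_peMl (normr_ge0 _) Hz1) _.
  rewrite -normrM.
  have -> : z * x i 0 = (cmx W *m x) i 0 by rewrite Hx mxE.
  rewrite mxE; apply: le_trans (ler_norm_sum _ _ _) _.
  apply: ler_sum => j _; rewrite normrM /cmx mxE ger0_norm //.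
  by rewrite ler0c.
have := Hcore u Hu0 Hu => Hu00.
move/negP: Hxnz; apply; apply/eqP; apply/matrixP => i j; rewrite ord1 !mxE.
apply: eq0_nc.
by have := congr1 (fun M : 'cV[R]_N => M i 0) Hu00; rewrite /u !mxE.
Qed.

Lemma zid1 (V : zmodType) (a r s : V) : r = a + s - (a - r + s).
Proof. by rewrite opprD opprB addrAC -!addrA addNr addr0 addrC subrK. Qed.

Lemma zid2 (V : zmodType) (a b c e f : V) : a + b - c - (b + e - f) + e = a - (c - f).
Proof.
rewrite opprB opprD addrA -(addrA _ _ e) subrK.
rewrite opprB addrC !addrA.
by rewrite (addrC (-b) a) subrK addrAC.
Qed.

Lemma weak_of (R : rcfType) m n (A P Rm S : 'M[R]_(m, n)) Pd :
  dp_regular A P Rm S Pd -> dp_weak_regular A P Rm S Pd.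
Proof.
case=> H1 H2 H3 H4 H5; split => // i j; rewrite mxE.
  by apply: sumr_ge0 => k _; apply: mulr_ge0.
by rewrite -oppr_ge0 -sumrN; apply: sumr_ge0 => k _; rewrite -mulrN mulr_ge0 // oppr_ge0.
Qed.

Lemma null_mx (R : rcfType) k l n (P : 'M[R]_(k, n)) (S : 'M[R]_(l, n)) :
  (forall x, in_null P x -> in_null S x) ->
  forall p (M : 'M[R]_(n, p)), P *m M = 0 -> S *m M = 0.
Proof.
move=> H p M HM; apply/matrixP => i j.
have h : in_null S (M *m delta_mx j 0).
  by apply: H; rewrite /in_null mulmxA HM mul0mx.
move: h; rewrite /in_null mulmxA -colE => /(congr1 (fun N : 'cV[R]_l => N i 0)).
by rewrite !mxE.
Qed.

Lemma col_eq (R : rcfType) k n (M : 'M[R]_(k, n)) (N : 'M[R]_k) :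
  (forall y, in_range M y -> N *m y = y) -> N *m M = M.
Proof.
move=> H; apply/matrixP => i j.
have h := H (M *m delta_mx j 0) (ex_intro _ _ erefl).
move: h; rewrite mulmxA -!colE => /(congr1 (fun N : 'cV[R]_k => N i 0)).
by rewrite !mxE.
Qed.

Lemma nonneg_neg_mul (R : rcfType) k l n (M : 'M[R]_(k, l)) (N : 'M[R]_(l, n)) :
  mx_nonpos M -> mx_nonneg N -> mx_nonpos (M *m N).
Proof.
move=> HM HN i j; rewrite mxE.
by rewrite -oppr_ge0 -sumrN; apply: sumr_ge0 => t _; rewrite -mulNr mulr_ge0 // oppr_ge0.
Qed.

Lemma neg_neg_mul (R : rcfType) k l n (M : 'M[R]_(k, l)) (N : 'M[R]_(l, n)) :
  mx_nonpos M -> mx_nonpos N -> mx_nonneg (M *m N).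
Proof.
move=> HM HN i j; rewrite mxE.
by apply: sumr_ge0 => t _; rewrite -mulrNN mulr_ge0 // oppr_ge0.
Qed.

Lemma nonneg_sub (R : rcfType) k l (M N : 'M[R]_(k, l)) :
  mx_nonneg M -> mx_nonpos N -> mx_nonneg (M - N).
Proof. move=> HM HN i j; rewrite !mxE; have := HM i j; have := HN i j; lra. Qed.

Lemma block_nonneg (R : rcfType) n (X Y : 'M[R]_n) :
  mx_nonneg X -> mx_nonneg Y -> mx_nonneg (block_mx X Y (1%:M : 'M[R]_n) 0).
Proof.
move=> HX HY i j.
rewrite -(splitK i) -(splitK j).
case: (split i) => a; case: (split j) => b /=.
- by rewrite block_mxEul.
- by rewrite block_mxEur.
- by rewrite block_mxEdl mxE ler0n.
- by rewrite block_mxEdr mxE.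
Qed.

Lemma block_core (R : rcfType) m n (X Y : 'M[R]_n) (Pd : 'M[R]_(n, m)) (V : 'M[R]_(m, n))
  (Ah : 'M[R]_(n, m)) (u : 'cV[R]_(n + n)) :
  mx_nonneg X -> mx_nonneg Y -> mx_nonneg Pd -> mx_nonneg Ah -> X + Y = Pd *m V ->
  Ah = Pd + (X + Y) *m Ah ->
  (forall i, 0 <= u i 0) ->
  (forall i, u i 0 <= (block_mx X Y (1%:M : 'M[R]_n) 0 *m u) i 0) -> u = 0.
Proof.
move=> HX HY HPd HAh HT HAhe Hu0 Hu.
rewrite -(vsubmxK u) in Hu Hu0 *.
move: (usubmx u) (dsubmx u) Hu Hu0 => u1 u2 Hu Hu0.
rewrite mul_block_col mul1mx mul0mx addr0 in Hu.
have H10 : forall i, 0 <= u1 i 0 by move=> i; have := Hu0 (lshift n i); rewrite col_mxEu.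
have H20 : forall i, 0 <= u2 i 0 by move=> i; have := Hu0 (rshift n i); rewrite col_mxEd.
have H21 : forall i, u2 i 0 <= u1 i 0 by move=> i; have := Hu (rshift n i); rewrite !col_mxEd.
have H1 : forall i, u1 i 0 <= ((X + Y) *m u1) i 0.
  move=> i; have := Hu (lshift n i); rewrite !col_mxEu => h.
  apply: le_trans h _; rewrite mulmxDl [X in _ <= X]mxE [X in X <= _]mxE lerD2l.
  exact: mono_mul.
have HT0 : mx_nonneg (X + Y) by move=> i j; rewrite mxE addr_ge0.
have Hu1 : u1 = 0.
  exact: (core HT0 HPd HAh HT HAhe H10 H1).
have Hu2 : u2 = 0.
  apply/matrixP => i j; rewrite ord1 mxE; apply/eqP; rewrite eq_le H20 andbT.
  by have := H21 i; rewrite Hu1 mxE.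
by rewrite Hu1 Hu2 col_mx0.
Qed.

Local Close Scope complex_scope.
Unset Implicit Arguments.

Theorem theorem3p1 (R : rcfType) (m n : nat)
  (A P1 R1 S1 P2 R2 S2 : 'M[R]_(m, n))
  (Ad P1d P2d : 'M[R]_(n, m)) (Ahatd : 'M[R]_(n, m)) :
  is_MP_inverse A Ad -> mx_nonneg Ad ->
  is_MP_inverse P1 P1d -> is_MP_inverse P2 P2d ->
  ((dp_regular A P1 R1 S1 P1d /\ dp_regular A P2 R2 S2 P2d) \/
   (dp_weak_regular A P1 R1 S1 P1d /\ dp_weak_regular A P2 R2 S2 P2d)) ->
  (forall x, in_null P2 x -> in_null S2 x) ->
  (forall y, in_range S2 y -> in_range P2 y) ->
  ~~ spectrum (S2 *m P1d) 1 ->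
  is_MP_inverse ((1%:M - S2 *m P1d) *m A) Ahatd -> mx_nonneg Ahatd ->
  spectral_radius
    (block_mx (P2d *m R2 - P2d *m S2 *m P1d *m R1) (P2d *m S2 *m P1d *m S1)
              (1%:M : 'M[R]_n) 0) < 1.
Proof.
move=> _ _ HP1 HP2 Hsplit HnullS2 HrangeS2 Hspec HAh HAh0.
have [W1 W2] : dp_weak_regular A P1 R1 S1 P1d /\ dp_weak_regular A P2 R2 S2 P2d.
  by case: Hsplit => [[h1 h2]|//]; split; apply: weak_of.
case: W1 => [[HA1 Hr1 Hn1] _ HP1d0 HP1R HP1S].
case: W2 => [[HA2 Hr2 Hn2] _ HP2d0 HP2R HP2S].
case: HP1 => HP1a HP1b HP1c HP1e.
case: HP2 => HP2a HP2b HP2c HP2e.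
set Mm := (1%:M - S2 *m P1d).
set Ah := Mm *m A.
case: HAh => HAha HAhb HAhc HAhe.
set X := P2d *m R2 - P2d *m S2 *m P1d *m R1.
set Y := P2d *m S2 *m P1d *m S1.
have HX : mx_nonneg X.
  rewrite /X (_ : P2d *m S2 *m P1d *m R1 = (P2d *m S2) *m (P1d *m R1)); last by rewrite !mulmxA.
  by apply: nonneg_sub => //; apply: nonneg_neg_mul.
have HY : mx_nonneg Y.
  by rewrite /Y -mulmxA; apply: neg_neg_mul.
have HnP1S2 : forall x, in_null P1 x -> in_null S2 x.
  by move=> x /Hn1 /Hn2 /HnullS2.
have HnP2A : forall x, in_null P2 x -> in_null A x by move=> x /Hn2.
have HS2P : S2 *m P1d *m P1 = S2.
  have h : S2 *m (1%:M - P1d *m P1) = 0.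
    apply: (null_mx HnP1S2).
    by rewrite mulmxBr mulmx1 mulmxA HP1a subrr.
  by move: h; rewrite mulmxBr mulmx1 mulmxA => /eqP; rewrite subr_eq0 => /eqP <-.
have HAP : A *m P2d *m P2 = A.
  have h : A *m (1%:M - P2d *m P2) = 0.
    apply: (null_mx HnP2A).
    by rewrite mulmxBr mulmx1 mulmxA HP2a subrr.
  by move: h; rewrite mulmxBr mulmx1 mulmxA => /eqP; rewrite subr_eq0 => /eqP <-.
have HMu : Mm \in unitmx.
  rewrite unitmxE unitfE; apply/negP => /det0P [v Hv0 Hv].
  move/negP: Hspec; apply; apply/eigenvalueP.
  exists (map_mx (real_complex R) v).
    have e : v *m (S2 *m P1d) = v.
      by move: Hv; rewrite /Mm mulmxBr mulmx1 => /eqP; rewrite subr_eq0 => /eqP <-.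
    by rewrite /cmx -map_mxM e scale1r.
  by rewrite map_mx_eq0.
have HrA : forall y, in_range A y -> in_range Ah y.
  move=> y [x0 ->].
  pose z := invmx Mm *m (A *m x0).
  have Hz : Mm *m z = A *m x0 by rewrite /z mulKVmx.
  have Hz2 : z = A *m x0 + S2 *m (P1d *m z).
    by rewrite -Hz /Mm mulmxBl mul1mx mulmxA subrK.
  have [w' Hw'] : in_range A (S2 *m (P1d *m z)).
    by apply/Hr2/HrangeS2; exists (P1d *m z).
  exists (x0 + w'); rewrite /Ah -mulmxA mulmxDr -Hw' -Hz2 Hz //.
have e3 : Ah *m Ahatd *m P2 = P2.
  apply: col_eq => y /Hr2 /HrA [w ->].
  by rewrite mulmxA HAha.
have e1 : Ah *m (P2d *m P2) = Ah by rewrite /Ah -mulmxA (mulmxA A) HAP.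
have Ha : P2d *m P2 *m Ahatd = Ahatd.
  have -> : Ahatd = (Ahatd *m Ah)^T *m Ahatd by rewrite HAhe HAhb.
  rewrite trmx_mul !mulmxA.
  have e2 : P2d *m P2 *m Ah^T = Ah^T by rewrite -{1}HP2e -trmx_mul e1.
  by rewrite e2.
have Hb : P2d *m Ah *m Ahatd = P2d.
  have e4 : P2^T *m (Ah *m Ahatd) = P2^T by rewrite -HAhc -trmx_mul e3.
  have -> : P2d = P2d *m (P2 *m P2d)^T by rewrite HP2c mulmxA HP2b.
  by rewrite trmx_mul -(mulmxA _ Ah) -(mulmxA P2d) -(mulmxA P2d^T) e4.
have HT : X + Y = P2d *m (P2 - Ah).
  have eR1 : R1 = P1 + S1 - A by rewrite HA1; apply: zid1.
  have eR2 : R2 = P2 + S2 - A by rewrite HA2; apply: zid1.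
  rewrite /X /Y /Ah /Mm mulmxBl mul1mx eR1 eR2 !mulmxBr !mulmxDr !mulmxA.
  have -> : P2d *m S2 *m P1d *m P1 = P2d *m S2 by rewrite -!mulmxA (mulmxA S2) HS2P.
  by rewrite zid2.
have HAhe2 : Ahatd = P2d + (X + Y) *m Ahatd.
  by rewrite HT mulmxBr mulmxBl Ha Hb addrC subrK.
apply: spec_lt1; first exact: block_nonneg.
move=> u Hu0 Hu; exact: (block_core HX HY HP2d0 HAh0 HT HAhe2 Hu0 Hu).
Qed.
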